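(* Let $\mathfrak{T}$ be a triangulation of the strip and $t=\Phi(\mathfrak{T})$. For $j\in\mathbb{Z}$ let $\gamma_j$ be the number of triangles of $\mathfrak{T}$ incident with the vertex $j^\circ$, i.e. $\gamma_j=1+\#\{\text{arcs of }\mathfrak{T}\text{ with endpoint } j^\circ\}$. Then for all $j,a\in\mathbb{Z}$, $t_{j-1,a}+t_{j+1,a}=\gamma_j\,t_{ja}$, and moreover $\gamma_j=c_{j-1,j+1}$.
   Context: Vertices of the strip: two disjoint copies of $\mathbb{Z}$, written $\mathbb{Z}^\circ=\{p^\circ: p\in\mathbb{Z}\}$ (upper edge) and $\mathbb{Z}_\circ=\{q_\circ : q\in\mathbb{Z}\}$ (lower edge); $p^\circ$ is the point $(-p,1)$ and $q_\circ$ the point $(q,-1)$ of $\mathbb{R}\times[-1,1]$. A connecting arc is a pair $(p^\circ,q_\circ)$; an internal arc is a pair $(p^\circ,q^\circ)$ or $(p_\circ,q_\circ)$ with $p\le q-2$. Two distinct arcs cross exactly in the following cases: connecting arcs $(p^\circ,q_\circ),(p'^\circ,q'_\circ)$ cross iff $(p-p')(q-q')>0$; internal arcs $(a^\circ,b^\circ),(c^\circ,d^\circ)$ cross iff $a<c<b<d$ or $c<a<d<b$ (same for lower internal arcs); $(a^\circ,b^\circ)$ crosses $(p^\circ,q_\circ)$ iff $a<p<b$; $(a_\circ,b_\circ)$ crosses $(p^\circ,q_\circ)$ iff $a<q<b$; upper and lower internal arcs never cross. A triangulation of the strip is a maximal set $\mathfrak{T}$ of pairwise non-crossing arcs such that for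 every $(i,j)\in\mathbb{Z}^2$ there are $(p^\circ,q_\circ),(p'^\circ,q'_\circ)\in\mathfrak{T}$ with $p<i,\ q>j$ and $p'>i,\ q'<j$. Friese numbers: for a convex polygon with vertices $v_0,\dots,v_n$ in cyclic order and triangulation $\mathcal{X}$, with $a_l$ the number of triangles at $v_l$, set $\mathcal{X}(v_k,v_l)=m_k(l)$ where $m_k(k)=0$, $m_k(k+1)=1$, $m_k(l+1)=a_lm_k(l)-m_k(l-1)$ (indices mod $n+1$). $\Phi(\mathfrak{T})_{ij}$: choose $(p^\circ,q_\circ),(r^\circ,s_\circ)\in\mathfrak{T}$ with $p<i<r$, $s<j<q$, let $P$ be the polygon with vertices in cyclic order $p^\circ,\dots,r^\circ,s_\circ,\dots,q_\circ$, $\mathfrak{T}_P$ the triangulation of $P$ by the arcs of $\mathfrak{T}$ that are diagonals of $P$, and set $\Phi(\mathfrak{T})_{ij}=\mathfrak{T}_P(i^\circ,j_\circ)$. For an $\mathrm{SL}_2$-tiling $t$ and $i<j$, $c_{ij}=t_{ia}t_{j,a+1}-t_{i,a+1}t_{ja}$ for any integer $a$ (independent of $a$). *)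

(* Defs.v *)
From Stdlib Require Import ZArith List Lia Bool ClassicalEpsilon.
Import ListNotations.
Open Scope Z_scope.

(* Vertices of the strip: U p = p^o (upper edge), L q = q_o (lower edge). *)
Inductive vtx := U (p : Z) | L (q : Z).

(* Arcs: Conn p q = (p^o, q_o); Up a b = (a^o, b^o); Low a b = (a_o, b_o).
   Internal arcs are only valid when a <= b - 2 (see [valid_arc]). *)
Inductive arc := Conn (p q : Z) | Up (a b : Z) | Low (a b : Z).

Definition arc_eq_dec (x y : arc) : {x = y} + {x <> y}.
Proof. decide equality; apply Z.eq_dec. Defined.

Definition valid_arc (x : arc) : Prop :=
  match x with
  | Conn _ _ => True
  | Up a b | Low a b => a <= b - 2
  end.

Definition has_endpoint (v : vtx) (x : arc) : Prop :=
  match x with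
  | Conn p q => v = U p \/ v = L q
  | Up a b => v = U a \/ v = U b
  | Low a b => v = L a \/ v = L b
  end.

Definition cross (x y : arc) : Prop :=
  match x, y with
  | Conn p q, Conn p' q' => (p - p') * (q - q') > 0
  | Up a b, Up c d | Low a b, Low c d =>
      (a < c /\ c < b /\ b < d) \/ (c < a /\ a < d /\ d < b)
  | Up a b, Conn p _ | Conn p _, Up a b => a < p /\ p < b
  | Low a b, Conn _ q | Conn _ q, Low a b => a < q /\ q < b
  | _, _ => False
  end.

Definition triangulation (T : arc -> bool) : Prop :=
  (forall x, T x = true -> valid_arc x) /\
  (forall x y, T x = true -> T y = true -> x <> y -> ~ cross x y) /\
  (forall x, valid_arc x -> T x = false -> exists y, T y = true /\ cross x y) /\
  (forall i j : Z, exists p q p' q',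
      T (Conn p q) = true /\ T (Conn p' q') = true /\
      p < i /\ q > j /\ p' > i /\ q' < j).

Definition mk_arc (v w : vtx) : option arc :=
  match v, w with
  | U a, L b | L b, U a => Some (Conn a b)
  | U a, U b => if a + 2 <=? b then Some (Up a b)
                else if b + 2 <=? a then Some (Up b a) else None
  | L a, L b => if a + 2 <=? b then Some (Low a b)
                else if b + 2 <=? a then Some (Low b a) else None
  end.

(* Polygon P with vertices, in cyclic order, p^o,...,r^o,s_o,...,q_o,
   indexed by 0 .. N-1. *)
Definition poly_size (p q r s : Z) : nat := Z.to_nat ((r - p + 1) + (q - s + 1)).

Definition poly_vtx (p r s : Z) (k : nat) : vtx :=
  let kz := Z.of_nat k in
  if kz <=? r - p then U (p + kz) else L (s + kz - (r - p + 1)).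

(* Is the arc joining v and w a diagonal of P belonging to T?
   (v, w are vertices of P; the edges of P that are arcs are (p^o,q_o)
   and (r^o,s_o); the other edges join adjacent vertices and are not arcs.) *)
Definition is_diag (T : arc -> bool) (p q r s : Z) (v w : vtx) : bool :=
  match mk_arc v w with
  | Some x => T x && negb (if arc_eq_dec x (Conn p q) then true else false)
                  && negb (if arc_eq_dec x (Conn r s) then true else false)
  | None => false
  end.

(* a_l = number of triangles of T_P at vertex v_l = 1 + number of diagonals
   of T_P at v_l. *)
Definition poly_a (T : arc -> bool) (p q r s : Z) (l : nat) : Z :=
  1 + Z.of_nat (length (filter
        (fun k => negb (Nat.eqb k l) &&
                  is_diag T p q r s (poly_vtx p r s l) (poly_vtx p r s k))
        (seq 0 (poly_size p q r s)))).

(* mpair a k d = (m_k(k+d), m_k(k+d+1)) for the recurrence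
   m_k(k)=0, m_k(k+1)=1, m_k(l+1) = a_l m_k(l) - m_k(l-1). *)
Fixpoint mpair (a : nat -> Z) (k d : nat) : Z * Z :=
  match d with
  | O => (0, 1)
  | S d' => let (x, y) := mpair a k d' in (y, a (k + d' + 1)%nat * y - x)
  end.

(* X(v_k, v_l) for the triangulation given by T of the polygon P
   (indices of a taken mod N). *)
Definition friese (T : arc -> bool) (p q r s : Z) (k l : nat) : Z :=
  let N := poly_size p q r s in
  let a := fun m => poly_a T p q r s (Nat.modulo m N) in
  fst (mpair a k (Nat.modulo (l + N - k) N)).

Definition Phi_choice (T : arc -> bool) (i j : Z) (c : Z * Z * Z * Z) : Prop :=
  let '(p, q, r, s) := c in
  T (Conn p q) = true /\ T (Conn r s) = true /\ p < i < r /\ s < j < q.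

(* Phi(T)_{ij} = T_P(i^o, j_o); the choice of arcs is made by Hilbert's epsilon. *)
Definition Phi (T : arc -> bool) (i j : Z) : Z :=
  let '(p, q, r, s) := epsilon (inhabits (0, 0, 0, 0)) (Phi_choice T i j) in
  friese T p q r s (Z.to_nat (i - p)) (Z.to_nat ((r - p + 1) + (j - s))).

(* Main.v *)
Require Import Defs.
From Stdlib Require Import ZArith List Lia Bool Classical ClassicalEpsilon.
Import ListNotations.
Open Scope Z_scope.


Definition zr (a b : Z) : list Z :=
  map (fun k => a + Z.of_nat k) (seq 0 (Z.to_nat (b - a + 1))).

Lemma seq_shift0 : forall n m, seq m n = map (Nat.add m) (seq 0 n).
Proof.
  induction n; intros m; simpl; auto.
  f_equal; [lia|]. rewrite IHn. rewrite (IHn 1%nat). rewrite map_map.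
  apply map_ext. intros; lia.
Qed.

Lemma In_zr : forall a b w, In w (zr a b) <-> a <= w <= b.
Proof.
  intros. unfold zr. rewrite in_map_iff. split.
  - intros [k [Hk Hin]]. apply in_seq in Hin. lia.
  - intros H. exists (Z.to_nat (w - a)). split; [lia|]. apply in_seq. lia.
Qed.

Lemma zr_empty : forall a b, b < a -> zr a b = [].
Proof. intros. unfold zr. replace (Z.to_nat (b - a + 1)) with 0%nat by lia. reflexivity. Qed.

Lemma zr_cons : forall a b, a <= b -> zr a b = a :: zr (a+1) b.
Proof.
  intros. unfold zr. replace (Z.to_nat (b - a + 1)) with (S (Z.to_nat (b - (a+1) + 1))) by lia.
  simpl. f_equal; [lia|]. rewrite (seq_shift0 _ 1%nat), map_map. apply map_ext. intros; lia.
Qed.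

Lemma zr_split : forall a m b, a - 1 <= m -> m <= b -> zr a b = zr a m ++ zr (m+1) b.
Proof.
  intros a m b H1 H2. remember (Z.to_nat (m - a + 1)) as n.
  revert a H1 H2 Heqn. induction n; intros a H1 H2 Hn.
  - rewrite (zr_empty a m) by lia. simpl. f_equal. lia.
  - rewrite (zr_cons a b) by lia. rewrite (zr_cons a m) by lia. simpl. f_equal.
    apply IHn; lia.
Qed.

Lemma zr_snoc : forall a b, a <= b -> zr a b = zr a (b-1) ++ [b].
Proof.
  intros. rewrite (zr_split a (b-1) b) by lia. f_equal. replace (b-1+1) with b by lia.
  rewrite zr_cons by lia. rewrite zr_empty by lia. auto.
Qed.

Lemma zr_single : forall a, zr a a = [a].
Proof. intros. rewrite zr_cons by lia. rewrite zr_empty by lia. auto. Qed.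

Lemma NoDup_zr : forall a b, NoDup (zr a b).
Proof.
  intros. unfold zr. apply NoDup_map_NoDup_ForallPairs.
  - intros x y _ _ H. lia.
  - apply seq_NoDup.
Qed.

Definition cnt {A} (f : A -> bool) (l : list A) : nat := length (filter f l).

Lemma cnt_app : forall A (f : A -> bool) l1 l2, cnt f (l1 ++ l2) = (cnt f l1 + cnt f l2)%nat.
Proof. intros. unfold cnt. rewrite filter_app, length_app. auto. Qed.

Lemma cnt_zero : forall A (f : A -> bool) l, (forall x, In x l -> f x = false) -> cnt f l = 0%nat.
Proof.
  intros. unfold cnt. induction l; simpl; auto. rewrite H by (left; auto).
  apply IHl. intros; apply H; right; auto.
Qed.

Lemma cnt_ext : forall A (f g : A -> bool) l, (forall x, In x l -> f x = g x) -> cnt f l = cnt g l.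
Proof. intros. unfold cnt. f_equal. apply filter_ext_in. auto. Qed.

Lemma cnt_map : forall A B (f : B -> bool) (g : A -> B) l, cnt f (map g l) = cnt (fun x => f (g x)) l.
Proof.
  intros. unfold cnt. induction l; simpl; auto. destruct (f (g a)); simpl; auto.
Qed.

Lemma cnt_cons : forall A (f : A -> bool) x l, cnt f (x :: l) = ((if f x then 1 else 0) + cnt f l)%nat.
Proof. intros. unfold cnt. simpl. destruct (f x); auto. Qed.

Definition step (c : Z) (st : Z * Z) : Z * Z := (snd st, c * snd st - fst st).
Definition steps (cs : list Z) (st : Z * Z) : Z * Z := fold_left (fun s c => step c s) cs st.

Lemma steps_app : forall l1 l2 st, steps (l1 ++ l2) st = steps l2 (steps l1 st).
Proof. intros. unfold steps. apply fold_left_app. Qed.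

Lemma steps_cons : forall c l st, steps (c :: l) st = steps l (step c st).
Proof. reflexivity. Qed.

Lemma steps_nil : forall st, steps [] st = st.
Proof. reflexivity. Qed.

Lemma mpair_steps : forall a k d, mpair a k d = steps (map a (seq (k+1) d)) (0,1).
Proof.
  intros a k d. induction d.
  - reflexivity.
  - rewrite seq_S, map_app, steps_app. rewrite <- IHd. simpl.
    destruct (mpair a k d) as [x y]. unfold step. simpl. replace (k+1+d)%nat with (k+d+1)%nat by lia. reflexivity.
Qed.


Definition adj (E : Z -> Z -> bool) (w u : Z) : bool :=
  if w + 2 <=? u then E w u else if u + 2 <=? w then E u w else false.

Definition C (E : Z -> Z -> bool) (x y w : Z) : Z := Z.of_nat (cnt (adj E w) (zr x y)).

Definition NCE (E : Z -> Z -> bool) : Prop :=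
  forall a b c d, a + 2 <= b -> c + 2 <= d -> E a b = true -> E c d = true ->
    a < c < b -> b < d -> False.

Definition LM (E : Z -> Z -> bool) (x y : Z) : Prop :=
  forall a b, x <= a -> b <= y -> a + 2 <= b -> E a b = false ->
    exists c d, x <= c /\ d <= y /\ c + 2 <= d /\ E c d = true /\
      ((a < c < b /\ b < d) \/ (c < a /\ a < d < b)).

Lemma find_max : forall (P : Z -> bool) n lo hi, Z.to_nat (hi - lo) = n -> lo <= hi -> P lo = true ->
  exists z, lo <= z <= hi /\ P z = true /\ forall w, z < w <= hi -> P w = false.
Proof.
  intros P n. induction n; intros lo hi Hn Hle Hp.
  - exists lo. split; [lia|]. split; auto. intros; lia.
  - destruct (P hi) eqn:Ph.
    + exists hi. split; [lia|]. split; auto. intros; lia.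
    + destruct (IHn lo (hi - 1)) as [z [Hz1 [Hz2 Hz3]]]; try lia; auto.
      exists z. split; [lia|]. split; auto. intros w Hw.
      destruct (Z.eq_dec w hi); [subst; auto|]. apply Hz3; lia.
Qed.

Lemma adj_false_near : forall E w u, w - 2 < u < w + 2 -> adj E w u = false.
Proof.
  intros. unfold adj. destruct (w + 2 <=? u) eqn:H1; [apply Z.leb_le in H1; lia|].
  destruct (u + 2 <=? w) eqn:H2; [apply Z.leb_le in H2; lia|]. auto.
Qed.

Lemma adj_true : forall E w u, adj E w u = true ->
  (w + 2 <= u /\ E w u = true) \/ (u + 2 <= w /\ E u w = true).
Proof.
  intros E w u. unfold adj. destruct (w + 2 <=? u) eqn:H1.
  - apply Z.leb_le in H1. auto.
  - destruct (u + 2 <=? w) eqn:H2; [apply Z.leb_le in H2; auto|discriminate].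
Qed.

Lemma adj_up : forall E w u, w + 2 <= u -> adj E w u = E w u.
Proof. intros. unfold adj. destruct (w + 2 <=? u) eqn:H1; auto. apply Z.leb_gt in H1; lia. Qed.

Lemma adj_down : forall E w u, u + 2 <= w -> adj E w u = E u w.
Proof.
  intros. unfold adj. destruct (w + 2 <=? u) eqn:H1. apply Z.leb_le in H1; lia.
  destruct (u + 2 <=? w) eqn:H2; auto. apply Z.leb_gt in H2; lia.
Qed.

Lemma LM_Exy : forall E x y, LM E x y -> x + 2 <= y -> E x y = true.
Proof.
  intros. destruct (E x y) eqn:He; auto.
  destruct (H x y) as [c [d Hcd]]; try lia; auto.
Qed.

Lemma interval_lemma : forall E, NCE E -> forall n x y, Z.to_nat (y - x) = n -> x < y -> LM E x y ->
  forall u v, steps (map (fun w => 1 + C E x y w) (zr (x+1) (y-1))) (u, v) =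
    (C E x y y * v + (1 - C E x y x * C E x y y) * u, v - C E x y x * u).
Proof.
  intros E HN n. induction n as [n IH] using (well_founded_induction lt_wf).
  intros x y Hn Hxy HL u v.
  destruct (Z.eq_dec y (x+1)) as [Hy|Hy].
  - subst y. rewrite zr_empty by lia. rewrite steps_nil.
    assert (H0 : forall w, x <= w <= x + 1 -> C E x (x+1) w = 0).
    { intros w Hw. unfold C. rewrite cnt_zero; auto. intros u' Hu'. apply In_zr in Hu'.
      apply adj_false_near. lia. }
    rewrite !H0 by lia. f_equal; ring.
  - assert (Exy : E x y = true) by (apply LM_Exy; auto; lia).
    destruct (find_max (fun w => (w =? x + 1) || E x w) (Z.to_nat (y - 1 - (x+1))) (x+1) (y-1))
      as [z [Hz [Pz Mz]]]; try lia. 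
    assert (Exz : x + 2 <= z -> E x z = true).
    { intros. apply orb_true_iff in Pz. destruct Pz as [P|P]; auto. apply Z.eqb_eq in P. lia. }
    assert (Max : forall w, z < w <= y - 1 -> E x w = false).
    { intros w Hw. specialize (Mz w Hw). apply orb_false_iff in Mz. tauto. }
    assert (Ezy : z + 2 <= y -> E z y = true).
    { intros Hzy. destruct (E z y) eqn:E1; auto.
      destruct (HL z y) as [c [d [Hc [Hd [Hcd [Ecd Hcr]]]]]]; try lia; auto.
      destruct Hcr as [Hcr|Hcr]; [lia|].
      destruct (Z.eq_dec c x).
      - subst c. rewrite Max in Ecd; [discriminate|lia].
      - exfalso. apply (HN x z c d); auto; try lia. apply Exz. lia. }
    assert (Cx : C E x y x = C E x z x + 1).
    { unfold C. rewrite (zr_split x z y) by lia. rewrite cnt_app.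
      rewrite (zr_snoc (z+1) y) by lia. rewrite cnt_app.
      rewrite (cnt_zero _ _ (zr (z+1) (y-1))).
      2:{ intros w Hw. apply In_zr in Hw. rewrite adj_up by lia. apply Max. lia. }
      rewrite cnt_cons. rewrite (adj_up E x y) by lia. rewrite Exy. change (cnt (adj E x) []) with 0%nat. lia. }
    assert (Cy : C E x y y = C E z y y + 1).
    { unfold C. rewrite (zr_split x (z-1) y) by lia. rewrite cnt_app.
      rewrite (zr_cons x (z-1)) by lia. rewrite cnt_cons.
      rewrite (adj_down E y x) by lia. rewrite Exy.
      rewrite (cnt_zero _ _ (zr (x+1) (z-1))).
      2:{ intros w Hw. apply In_zr in Hw. rewrite adj_down by lia.
          destruct (E w y) eqn:Ew; auto. exfalso. apply (HN x z w y); auto; try lia. apply Exz; lia. }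
      replace (z - 1 + 1) with z by lia. lia. }
    assert (Cz : C E x y z = C E x z z + C E z y z).
    { unfold C. rewrite (zr_split x (z-1) y) by lia. rewrite cnt_app.
      rewrite (zr_snoc x z) by lia. rewrite cnt_app. rewrite cnt_cons.
      rewrite (adj_false_near E z z) by lia. change (cnt (adj E z) []) with 0%nat. replace (z - 1 + 1) with z by lia. lia. }
    assert (Cl : forall w, x < w < z -> C E x y w = C E x z w).
    { intros w Hw. unfold C. rewrite (zr_split x z y) by lia. rewrite cnt_app.
      rewrite (cnt_zero _ _ (zr (z+1) y)); [lia|].
      intros u' Hu. apply In_zr in Hu. unfold adj.
      destruct (w + 2 <=? u') eqn:H1; [|destruct (u' + 2 <=? w) eqn:H2; auto; apply Z.leb_le in H2; lia].
      apply Z.leb_le in H1. destruct (E w u') eqn:Ew; auto. exfalso.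
      apply (HN x z w u'); auto; try lia. apply Exz; lia. }
    assert (Cr : forall w, z < w < y -> C E x y w = C E z y w).
    { intros w Hw. unfold C. rewrite (zr_split x (z-1) y) by lia. rewrite cnt_app.
      replace (z - 1 + 1) with z by lia.
      rewrite (cnt_zero _ _ (zr x (z-1))); [lia|].
      intros u' Hu. apply In_zr in Hu. unfold adj.
      destruct (w + 2 <=? u') eqn:H1; [apply Z.leb_le in H1; lia|].
      destruct (u' + 2 <=? w) eqn:H2; auto. apply Z.leb_le in H2.
      destruct (E u' w) eqn:Ew; auto. exfalso.
      apply (HN u' w z y); auto; try lia. apply Ezy; lia. }
    assert (LMl : LM E x z).
    { intros a b Ha Hb Hab Eab. destruct (HL a b) as [c [d [Hc [Hd [Hcd [Ecd Hcr]]]]]]; try lia; auto.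
      exists c, d. repeat split; auto; try lia.
      destruct (Z.le_gt_cases d z); [lia|]. exfalso.
      destruct Hcr as [Hcr|Hcr]; [|lia].
      apply (HN x z c d); auto; try lia. apply Exz; lia. }
    assert (LMr : LM E z y).
    { intros a b Ha Hb Hab Eab. destruct (HL a b) as [c [d [Hc [Hd [Hcd [Ecd Hcr]]]]]]; try lia; auto.
      exists c, d. repeat split; auto; try lia.
      destruct (Z.le_gt_cases z c); [lia|]. exfalso.
      destruct Hcr as [Hcr|Hcr]; [lia|].
      apply (HN c d z y); auto; try lia. apply Ezy; lia. }
    rewrite (zr_split (x+1) (z-1) (y-1)) by lia. replace (z - 1 + 1) with z by lia.
    rewrite (zr_cons z (y-1)) by lia.
    rewrite map_app, steps_app. cbn [map]. rewrite steps_cons.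
    rewrite (map_ext_in _ (fun w => 1 + C E x z w) (zr (x+1) (z-1))).
    2:{ intros w Hw. apply In_zr in Hw. rewrite Cl by lia. auto. }
    rewrite (map_ext_in (fun w => 1 + C E x y w) (fun w => 1 + C E z y w) (zr (z+1) (y-1))).
    2:{ intros w Hw. apply In_zr in Hw. rewrite Cr by lia. auto. }
    rewrite (IH (Z.to_nat (z - x))) by (auto; lia).
    unfold step; cbn [fst snd].
    rewrite (IH (Z.to_nat (y - z))) by (auto; lia).
    rewrite Cx, Cy, Cz. f_equal; ring.
Qed.

Lemma steps_one : forall c st, steps [c] st = step c st.
Proof. reflexivity. Qed.
Lemma step_eq : forall c u v, step c (u, v) = (v, c * v - u).
Proof. reflexivity. Qed.

Lemma fan_upper : forall E, NCE E -> forall x y, x < y -> LM E x y -> forall beta alpha st,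
  steps ([beta + 1 + C E x y x] ++ map (fun w => 1 + C E x y w) (zr (x+1) (y-1)) ++
         [1 + C E x y y; alpha + 1]) st = steps [beta; alpha] st.
Proof.
  intros E HN x y Hxy HL beta alpha [u v].
  rewrite !steps_app, steps_one, step_eq.
  rewrite (interval_lemma E HN (Z.to_nat (y - x)) x y) by auto.
  set (a := C E x y x) in *; set (b := C E x y y) in *. unfold steps, step; cbn [fold_left fst snd]. f_equal; ring.
Qed.

Lemma fan_lower : forall E, NCE E -> forall x y, x < y -> LM E x y -> forall beta alpha st,
  steps ([beta + 1; 1 + C E x y x] ++ map (fun w => 1 + C E x y w) (zr (x+1) (y-1)) ++
         [alpha + 1 + C E x y y]) st = steps [beta; alpha] st.
Proof.
  intros E HN x y Hxy HL beta alpha [u v].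
  rewrite !steps_app. change (steps [beta+1; 1 + C E x y x] (u,v)) with (step (1 + C E x y x) (step (beta+1) (u,v))). rewrite !step_eq.
  rewrite (interval_lemma E HN (Z.to_nat (y - x)) x y) by auto.
  set (a := C E x y x) in *; set (b := C E x y y) in *. unfold steps, step; cbn [fold_left fst snd]. f_equal; ring.
Qed.


Definition EU (T : arc -> bool) a b := T (Up a b).
Definition EL (T : arc -> bool) a b := T (Low a b).
Definition isUL (T : arc -> bool) (p q r s x y : Z) : bool :=
  T (Conn x y) && negb ((x =? p) && (y =? q)) && negb ((x =? r) && (y =? s)).

Lemma arc_dec_Conn : forall x y p q,
  (if arc_eq_dec (Conn x y) (Conn p q) then true else false) = (x =? p) && (y =? q).
Proof.
  intros. destruct (arc_eq_dec (Conn x y) (Conn p q)) as [H|H].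
  - inversion H; subst. rewrite !Z.eqb_refl. auto.
  - destruct (x =? p) eqn:E1; destruct (y =? q) eqn:E2; auto.
    apply Z.eqb_eq in E1; apply Z.eqb_eq in E2; subst. congruence.
Qed.

Lemma is_diag_UU : forall T p q r s x u, is_diag T p q r s (U x) (U u) = adj (EU T) x u.
Proof.
  intros. unfold is_diag, mk_arc, adj, EU.
  destruct (x + 2 <=? u); [|destruct (u + 2 <=? x)]; auto;
  repeat (destruct arc_eq_dec; [discriminate|]); simpl; rewrite !andb_true_r; auto.
Qed.

Lemma is_diag_LL : forall T p q r s x u, is_diag T p q r s (L x) (L u) = adj (EL T) x u.
Proof.
  intros. unfold is_diag, mk_arc, adj, EL.
  destruct (x + 2 <=? u); [|destruct (u + 2 <=? x)]; auto;
  repeat (destruct arc_eq_dec; [discriminate|]); simpl; rewrite !andb_true_r; auto.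
Qed.

Lemma is_diag_UL : forall T p q r s x y, is_diag T p q r s (U x) (L y) = isUL T p q r s x y.
Proof. intros. unfold is_diag, mk_arc, isUL. rewrite !arc_dec_Conn. auto. Qed.

Lemma is_diag_LU : forall T p q r s x y, is_diag T p q r s (L y) (U x) = isUL T p q r s x y.
Proof. intros. unfold is_diag, mk_arc, isUL. rewrite !arc_dec_Conn. auto. Qed.

Definition pverts (p q r s : Z) : list vtx := map U (zr p r) ++ map L (zr s q).

Definition coefP (T : arc -> bool) (p q r s : Z) (v : vtx) : Z :=
  1 + Z.of_nat (cnt (is_diag T p q r s v) (pverts p q r s)).

Lemma coefP_U : forall T p q r s x, coefP T p q r s (U x) =
  1 + Z.of_nat (cnt (adj (EU T) x) (zr p r)) + Z.of_nat (cnt (isUL T p q r s x) (zr s q)).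
Proof.
  intros. unfold coefP, pverts. rewrite cnt_app, !cnt_map.
  rewrite (cnt_ext _ (fun u => is_diag T p q r s (U x) (U u)) (adj (EU T) x)) by (intros; apply is_diag_UU).
  rewrite (cnt_ext _ (fun u => is_diag T p q r s (U x) (L u)) (isUL T p q r s x)) by (intros; apply is_diag_UL).
  lia.
Qed.

Lemma coefP_L : forall T p q r s y, coefP T p q r s (L y) =
  1 + Z.of_nat (cnt (fun x => isUL T p q r s x y) (zr p r)) + Z.of_nat (cnt (adj (EL T) y) (zr s q)).
Proof.
  intros. unfold coefP, pverts. rewrite cnt_app, !cnt_map.
  rewrite (cnt_ext _ (fun u => is_diag T p q r s (L y) (U u)) (fun x => isUL T p q r s x y)) by (intros; apply is_diag_LU).
  rewrite (cnt_ext _ (fun u => is_diag T p q r s (L y) (L u)) (adj (EL T) y)) by (intros; apply is_diag_LL).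
  lia.
Qed.

Lemma is_diag_refl : forall T p q r s v, is_diag T p q r s v v = false.
Proof.
  intros. destruct v; [rewrite is_diag_UU|rewrite is_diag_LL]; apply adj_false_near; lia.
Qed.

Lemma map_vtx_up : forall p r s m n, (m + n <= Z.to_nat (r - p + 1))%nat ->
  map (poly_vtx p r s) (seq m n) = map U (zr (p + Z.of_nat m) (p + Z.of_nat m + Z.of_nat n - 1)).
Proof.
  intros. rewrite seq_shift0. unfold zr. rewrite !map_map.
  replace (Z.to_nat (p + Z.of_nat m + Z.of_nat n - 1 - (p + Z.of_nat m) + 1)) with n by lia.
  apply map_ext_in. intros k Hk. apply in_seq in Hk. unfold poly_vtx.
  destruct (Z.of_nat (m + k) <=? r - p) eqn:E; [|apply Z.leb_gt in E; lia]. f_equal. lia.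
Qed.

Lemma map_vtx_low : forall p r s m n, (Z.to_nat (r - p + 1) <= m)%nat -> p <= r ->
  map (poly_vtx p r s) (seq m n) =
  map L (zr (s + Z.of_nat m - (r - p + 1)) (s + Z.of_nat m - (r - p + 1) + Z.of_nat n - 1)).
Proof.
  intros. rewrite seq_shift0. unfold zr. rewrite !map_map.
  replace (Z.to_nat (s + Z.of_nat m - (r - p + 1) + Z.of_nat n - 1 - (s + Z.of_nat m - (r - p + 1)) + 1)) with n by lia.
  apply map_ext_in. intros k Hk. apply in_seq in Hk. unfold poly_vtx.
  destruct (Z.of_nat (m + k) <=? r - p) eqn:E; [apply Z.leb_le in E; lia|]. f_equal. lia.
Qed.

Lemma pverts_eq : forall p q r s, p <= r -> s <= q ->
  map (poly_vtx p r s) (seq 0 (poly_size p q r s)) = pverts p q r s.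
Proof.
  intros. unfold poly_size, pverts.
  replace (Z.to_nat (r - p + 1 + (q - s + 1))) with (Z.to_nat (r - p + 1) + Z.to_nat (q - s + 1))%nat by lia.
  rewrite seq_app, map_app. f_equal.
  - rewrite map_vtx_up by lia. f_equal. f_equal; lia.
  - rewrite map_vtx_low by lia. f_equal. f_equal; lia.
Qed.

Lemma poly_a_coef : forall T p q r s m, p <= r -> s <= q ->
  poly_a T p q r s m = coefP T p q r s (poly_vtx p r s m).
Proof.
  intros. unfold poly_a, coefP. f_equal. f_equal.
  rewrite <- pverts_eq by auto. rewrite cnt_map. unfold cnt. f_equal.
  apply filter_ext. intros k. destruct (Nat.eqb_spec k m).
  - subst. rewrite is_diag_refl. auto.
  - simpl. auto.
Qed.

Definition path (r s i a : Z) : list vtx := map U (zr (i+1) r) ++ map L (zr s a).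

Definition FW (T : arc -> bool) (p q r s i a : Z) : Z :=
  fst (steps (map (coefP T p q r s) (path r s i a)) (0, 1)).

Lemma friese_FW : forall T p q r s i a, p < i < r -> s < a < q ->
  friese T p q r s (Z.to_nat (i - p)) (Z.to_nat ((r - p + 1) + (a - s))) = FW T p q r s i a.
Proof.
  intros. unfold friese, FW.
  set (N := poly_size p q r s).
  set (k := Z.to_nat (i - p)). set (l := Z.to_nat ((r - p + 1) + (a - s))).
  assert (HN : N = Z.to_nat (r - p + 1 + (q - s + 1))) by reflexivity.
  assert (Hd : ((l + N - k) mod N = l - k)%nat).
  { symmetry. apply Nat.mod_unique with 1%nat; lia. }
  rewrite Hd, mpair_steps. f_equal. f_equal.
  rewrite (map_ext_in _ (fun m => poly_a T p q r s m)).
  2:{ intros m Hm. apply in_seq in Hm. rewrite Nat.mod_small by lia. auto. }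
  rewrite (map_ext_in _ (fun m => coefP T p q r s (poly_vtx p r s m))).
  2:{ intros m Hm. apply poly_a_coef; lia. }
  rewrite <- (map_map (poly_vtx p r s)). f_equal.
  unfold path.
  replace (l - k)%nat with (Z.to_nat (r - i) + Z.to_nat (a - s + 1))%nat by lia.
  rewrite seq_app, map_app. f_equal.
  - rewrite map_vtx_up by lia. f_equal. f_equal; lia.
  - rewrite map_vtx_low by lia. f_equal. f_equal; lia.
Qed.


Definition NCT (T : arc -> bool) := forall x y, T x = true -> T y = true -> x <> y -> ~ cross x y.
Definition MAXT (T : arc -> bool) :=
  forall x, valid_arc x -> T x = false -> exists y, T y = true /\ cross x y.

Ltac xc NC a b := exfalso; apply (NC a b); [assumption|assumption|
   (intro Heq; inversion Heq; subst; lia) | simpl; nia].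

Lemma isUL_false_T : forall T p q r s x y, T (Conn x y) = false -> isUL T p q r s x y = false.
Proof. intros. unfold isUL. rewrite H. auto. Qed.

Lemma isUL_ch : forall T p q r s p' q' r' s' x y,
  ((x =? p) && (y =? q)) = ((x =? p') && (y =? q')) ->
  ((x =? r) && (y =? s)) = ((x =? r') && (y =? s')) ->
  isUL T p q r s x y = isUL T p' q' r' s' x y.
Proof. intros. unfold isUL. rewrite H, H0. auto. Qed.

Lemma adj_EU_false : forall T x u, (x + 2 <= u -> T (Up x u) = false) -> (u + 2 <= x -> T (Up u x) = false) ->
  adj (EU T) x u = false.
Proof.
  intros. unfold adj, EU. destruct (x + 2 <=? u) eqn:E1; [apply Z.leb_le in E1; auto|].
  destruct (u + 2 <=? x) eqn:E2; [apply Z.leb_le in E2; auto|auto].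
Qed.

Lemma adj_EL_false : forall T x u, (x + 2 <= u -> T (Low x u) = false) -> (u + 2 <= x -> T (Low u x) = false) ->
  adj (EL T) x u = false.
Proof.
  intros. unfold adj, EL. destruct (x + 2 <=? u) eqn:E1; [apply Z.leb_le in E1; auto|].
  destruct (u + 2 <=? x) eqn:E2; [apply Z.leb_le in E2; auto|auto].
Qed.

Ltac Tfalse NC a b := let H := fresh in destruct (_ : bool) eqn:H; [xc NC a b|reflexivity].

Lemma coef_pq_U : forall T, NCT T -> forall p q r s p' q' x,
  T (Conn p q) = true -> p' <= p -> q <= q' -> p < x <= r -> s <= q ->
  coefP T p q r s (U x) = coefP T p' q' r s (U x).
Proof.
  intros T NC p q r s p' q' x Hpq H1 H2 H3 H4. rewrite !coefP_U.
  rewrite (zr_split p' (p-1) r) by lia. rewrite (zr_split s q q') by lia.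
  rewrite !cnt_app. replace (p - 1 + 1) with p by lia.
  rewrite (cnt_zero _ _ (zr p' (p-1))).
  2:{ intros u Hu. apply In_zr in Hu. apply adj_EU_false; intros; [lia|].
      destruct (T (Up u x)) eqn:E; auto. xc NC (Up u x) (Conn p q). }
  rewrite (cnt_zero _ (isUL T p' q' r s x) (zr (q+1) q')).
  2:{ intros y Hy. apply In_zr in Hy. apply isUL_false_T.
      destruct (T (Conn x y)) eqn:E; auto. xc NC (Conn x y) (Conn p q). }
  rewrite (cnt_ext _ (isUL T p q r s x) (isUL T p' q' r s x)). lia.
  intros y Hy. apply isUL_ch; auto.
  replace (x =? p) with false by (symmetry; apply Z.eqb_neq; lia).
  replace (x =? p') with false by (symmetry; apply Z.eqb_neq; lia). auto.
Qed.

Lemma coef_pq_L : forall T, NCT T -> forall p q r s p' q' y,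
  T (Conn p q) = true -> p' <= p -> q <= q' -> s <= y < q -> p <= r ->
  coefP T p q r s (L y) = coefP T p' q' r s (L y).
Proof.
  intros T NC p q r s p' q' y Hpq H1 H2 H3 H4. rewrite !coefP_L.
  rewrite (zr_split p' (p-1) r) by lia. rewrite (zr_split s q q') by lia.
  rewrite !cnt_app. replace (p - 1 + 1) with p by lia.
  rewrite (cnt_zero _ _ (zr p' (p-1))).
  2:{ intros u Hu. apply In_zr in Hu. apply isUL_false_T.
      destruct (T (Conn u y)) eqn:E; auto. xc NC (Conn u y) (Conn p q). }
  rewrite (cnt_zero _ _ (zr (q+1) q')).
  2:{ intros u Hu. apply In_zr in Hu. apply adj_EL_false; intros; [|lia].
      destruct (T (Low y u)) eqn:E; auto. xc NC (Low y u) (Conn p q). }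
  rewrite (cnt_ext _ (fun x => isUL T p q r s x y) (fun x => isUL T p' q' r s x y)). lia.
  intros x Hx. apply isUL_ch; auto.
  replace (y =? q) with false by (symmetry; apply Z.eqb_neq; lia).
  replace (y =? q') with false by (symmetry; apply Z.eqb_neq; lia). rewrite !andb_false_r. auto.
Qed.

Lemma FW_pq : forall T, NCT T -> forall p q r s p' q' i a,
  T (Conn p q) = true -> p' <= p -> q <= q' -> p < i < r -> s < a < q ->
  FW T p q r s i a = FW T p' q' r s i a.
Proof.
  intros. unfold FW. f_equal. f_equal. apply map_ext_in. intros v Hv.
  unfold path in Hv. apply in_app_or in Hv. destruct Hv as [Hv|Hv];
  apply in_map_iff in Hv; destruct Hv as [w [Hw Hin]]; subst; apply In_zr in Hin.
  - apply coef_pq_U; auto; lia.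
  - apply coef_pq_L; auto; lia.
Qed.


Lemma eqb_f : forall x y, x <> y -> (x =? y) = false.
Proof. intros. apply Z.eqb_neq. auto. Qed.

Ltac lnorm := repeat (repeat rewrite <- app_assoc; cbn [app]); reflexivity.

Lemma steps_mid : forall A B X Y st, (forall st, steps X st = steps Y st) ->
  steps (A ++ X ++ B) st = steps (A ++ Y ++ B) st.
Proof. intros. rewrite !steps_app. rewrite H. auto. Qed.

Lemma FW_fan_up : forall T, NCT T -> forall p q r s r2 i a,
  T (Conn p q) = true -> T (Conn r s) = true -> T (Conn r2 s) = true -> r < r2 ->
  (forall x y, r < x < r2 -> T (Conn x y) = false) ->
  LM (EU T) r r2 -> NCE (EU T) -> p < i < r -> s < a < q ->
  FW T p q r s i a = FW T p q r2 s i a.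
Proof.
  intros T NC p q r s r2 i a Hpq Hrs Hr2 Hlt NoC HL HN Hi Ha.
  assert (u1 : forall x, i < x < r -> coefP T p q r s (U x) = coefP T p q r2 s (U x)).
  { intros x Hx. rewrite !coefP_U. rewrite (zr_split p r r2) by lia. rewrite cnt_app.
    rewrite (cnt_zero _ _ (zr (r+1) r2)).
    2:{ intros u Hu. apply In_zr in Hu. apply adj_EU_false; intros; [|lia].
        destruct (T (Up x u)) eqn:E; auto. xc NC (Up x u) (Conn r s). }
    rewrite (cnt_ext _ (isUL T p q r s x) (isUL T p q r2 s x)). lia.
    intros y _. apply isUL_ch; auto. rewrite !(eqb_f x r), !(eqb_f x r2) by lia. auto. }
  assert (u2 : forall y, s < y <= a -> coefP T p q r s (L y) = coefP T p q r2 s (L y)).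
  { intros y Hy. rewrite !coefP_L. rewrite (zr_split p r r2) by lia. rewrite cnt_app.
    rewrite (cnt_zero _ _ (zr (r+1) r2)).
    2:{ intros u Hu. apply In_zr in Hu. apply isUL_false_T.
        destruct (Z.eq_dec u r2).
        - subst u. destruct (T (Conn r2 y)) eqn:E; auto. xc NC (Conn r2 y) (Conn r s).
        - apply NoC. lia. }
    rewrite (cnt_ext _ (fun x => isUL T p q r s x y) (fun x => isUL T p q r2 s x y)). lia.
    intros x _. apply isUL_ch; auto. rewrite !(eqb_f y s) by lia. rewrite !andb_false_r. auto. }
  assert (I1 : isUL T p q r s r s = false).
  { unfold isUL. rewrite !Z.eqb_refl. rewrite !andb_false_r. auto. }
  assert (I2 : isUL T p q r2 s r s = true).
  { unfold isUL. rewrite Hrs, (eqb_f r p), (eqb_f r r2) by lia. auto. }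
  assert (u3 : coefP T p q r2 s (U r) = coefP T p q r s (U r) + 1 + C (EU T) r r2 r).
  { rewrite !coefP_U. unfold C. rewrite (zr_split p r r2) by lia. rewrite cnt_app.
    rewrite (zr_cons r r2) by lia. rewrite (cnt_cons _ _ r). rewrite (adj_false_near _ r r) by lia.
    rewrite (zr_cons s q) by lia. rewrite !cnt_cons.
    rewrite I1, I2.
    rewrite (cnt_ext _ (isUL T p q r s r) (isUL T p q r2 s r) (zr (s+1) q)). lia.
    intros y Hy. apply In_zr in Hy. apply isUL_ch; auto. rewrite !(eqb_f y s) by lia. rewrite !andb_false_r. auto. }
  assert (u4 : coefP T p q r2 s (L s) = coefP T p q r s (L s) + 1).
  { rewrite !coefP_L. rewrite (zr_split p r r2) by lia. rewrite (zr_snoc p r) by lia. rewrite !cnt_app.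
    rewrite (cnt_zero _ _ (zr (r+1) r2)).
    2:{ intros u Hu. apply In_zr in Hu. destruct (Z.eq_dec u r2).
        - subst u. unfold isUL. rewrite !Z.eqb_refl. rewrite !andb_false_r. auto.
        - apply isUL_false_T. apply NoC. lia. }
    rewrite (cnt_ext _ (fun x => isUL T p q r s x s) (fun x => isUL T p q r2 s x s) (zr p (r-1))).
    2:{ intros x Hx. apply In_zr in Hx. apply isUL_ch; auto. rewrite (eqb_f x r), (eqb_f x r2) by lia. auto. }
    rewrite !cnt_cons, I1, I2. change (cnt (fun x : Z => isUL T p q r s x s) []) with 0%nat.
    change (cnt (fun x : Z => isUL T p q r2 s x s) []) with 0%nat. lia. }
  assert (u5 : forall z, r < z <= r2 -> coefP T p q r2 s (U z) = 1 + C (EU T) r r2 z).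
  { intros z Hz. rewrite coefP_U. unfold C. rewrite (zr_split p (r-1) r2) by lia. rewrite cnt_app.
    replace (r - 1 + 1) with r by lia.
    rewrite (cnt_zero _ _ (zr p (r-1))).
    2:{ intros u Hu. apply In_zr in Hu. apply adj_EU_false; intros; [lia|].
        destruct (T (Up u z)) eqn:E; auto. xc NC (Up u z) (Conn r s). }
    rewrite (cnt_zero _ _ (zr s q)). lia.
    intros y Hy. apply In_zr in Hy. destruct (Z.eq_dec z r2).
    - subst z. destruct (Z.eq_dec y s).
      + subst y. unfold isUL. rewrite !Z.eqb_refl. rewrite !andb_false_r. auto.
      + apply isUL_false_T. destruct (T (Conn r2 y)) eqn:E; auto. xc NC (Conn r2 y) (Conn r s).
    - apply isUL_false_T. apply NoC. lia. }
  unfold FW, path.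
  rewrite (zr_snoc (i+1) r) by lia. rewrite (zr_cons s a) by lia.
  rewrite (zr_split (i+1) (r-1) r2) by lia. replace (r - 1 + 1) with r by lia.
  rewrite (zr_cons r r2) by lia. rewrite (zr_snoc (r+1) r2) by lia.
  rewrite !map_app. cbn [map].
  set (cs1 := map (coefP T p q r s) (map U (zr (i + 1) (r - 1)))).
  set (cs2 := map (coefP T p q r s) (map L (zr (s + 1) a))).
  replace (map (coefP T p q r2 s) (map U (zr (i + 1) (r - 1)))) with cs1.
  2:{ unfold cs1. rewrite !map_map. apply map_ext_in. intros x Hx. apply In_zr in Hx. apply u1. lia. }
  replace (map (coefP T p q r2 s) (map L (zr (s + 1) a))) with cs2.
  2:{ unfold cs2. rewrite !map_map. apply map_ext_in. intros x Hx. apply In_zr in Hx. apply u2. lia. }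
  rewrite !map_app. cbn [map]. rewrite (map_map U (coefP T p q r2 s) (zr (r+1) (r2-1))).
  rewrite (map_ext_in _ (fun w => 1 + C (EU T) r r2 w) (zr (r+1) (r2-1))).
  2:{ intros w Hw. apply In_zr in Hw. apply u5. lia. }
  rewrite u3, u4, (u5 r2) by lia.
  set (b := coefP T p q r s (U r)). set (al := coefP T p q r s (L s)).
  match goal with |- fst (steps ?L1 _) = fst (steps ?L2 _) =>
    replace L1 with (cs1 ++ [b; al] ++ cs2) by lnorm;
    replace L2 with (cs1 ++ ([b + 1 + C (EU T) r r2 r] ++ map (fun w : Z => 1 + C (EU T) r r2 w) (zr (r + 1) (r2 - 1)) ++
         [1 + C (EU T) r r2 r2; al + 1]) ++ cs2) by lnorm end.
  f_equal. symmetry. apply steps_mid. intros st. apply (fan_upper (EU T) HN r r2 Hlt HL).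
Qed.

Lemma FW_fan_low : forall T, NCT T -> forall p q r s s2 i a,
  T (Conn p q) = true -> T (Conn r s) = true -> T (Conn r s2) = true -> s2 < s ->
  (forall x y, s2 < y < s -> T (Conn x y) = false) ->
  LM (EL T) s2 s -> NCE (EL T) -> p < i < r -> s < a < q ->
  FW T p q r s i a = FW T p q r s2 i a.
Proof.
  intros T NC p q r s s2 i a Hpq Hrs Hr2 Hlt NoC HL HN Hi Ha.
  assert (I1 : isUL T p q r s r s = false).
  { unfold isUL. rewrite !Z.eqb_refl. rewrite !andb_false_r. auto. }
  assert (I2 : isUL T p q r s2 r s = true).
  { unfold isUL. rewrite Hrs, (eqb_f r p), (eqb_f s s2) by lia. rewrite !andb_false_r. auto. }
  assert (l1 : forall x, i < x < r -> coefP T p q r s (U x) = coefP T p q r s2 (U x)).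
  { intros x Hx. rewrite !coefP_U. rewrite (zr_split s2 (s-1) q) by lia. rewrite cnt_app.
    replace (s - 1 + 1) with s by lia.
    rewrite (cnt_zero _ _ (zr s2 (s-1))).
    2:{ intros y Hy. apply In_zr in Hy. apply isUL_false_T.
        destruct (T (Conn x y)) eqn:E; auto. xc NC (Conn x y) (Conn r s). }
    rewrite (cnt_ext _ (isUL T p q r s x) (isUL T p q r s2 x)). lia.
    intros y _. apply isUL_ch; auto. rewrite !(eqb_f x r) by lia. auto. }
  assert (l2 : forall y, s < y <= a -> coefP T p q r s (L y) = coefP T p q r s2 (L y)).
  { intros y Hy. rewrite !coefP_L. rewrite (zr_split s2 (s-1) q) by lia. rewrite cnt_app.
    replace (s - 1 + 1) with s by lia.
    rewrite (cnt_zero _ _ (zr s2 (s-1))).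
    2:{ intros u Hu. apply In_zr in Hu. apply adj_EL_false; intros; [lia|].
        destruct (T (Low u y)) eqn:E; auto. xc NC (Low u y) (Conn r s). }
    rewrite (cnt_ext _ (fun x => isUL T p q r s x y) (fun x => isUL T p q r s2 x y)). lia.
    intros x _. apply isUL_ch; auto. rewrite !(eqb_f y s), (eqb_f y s2) by lia. rewrite !andb_false_r. auto. }
  assert (l3 : coefP T p q r s2 (U r) = coefP T p q r s (U r) + 1).
  { rewrite !coefP_U. rewrite (zr_split s2 (s-1) q) by lia. rewrite cnt_app.
    replace (s - 1 + 1) with s by lia.
    rewrite (cnt_zero _ _ (zr s2 (s-1))).
    2:{ intros y Hy. apply In_zr in Hy. destruct (Z.eq_dec y s2).
        - subst y. unfold isUL. rewrite !Z.eqb_refl. rewrite !andb_false_r. auto.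
        - apply isUL_false_T. apply NoC. lia. }
    rewrite (zr_cons s q) by lia. rewrite !cnt_cons. rewrite I1, I2.
    rewrite (cnt_ext _ (isUL T p q r s r) (isUL T p q r s2 r) (zr (s+1) q)). lia.
    intros y Hy. apply In_zr in Hy. apply isUL_ch; auto. rewrite !(eqb_f y s), (eqb_f y s2) by lia. rewrite !andb_false_r. auto. }
  assert (l4 : coefP T p q r s2 (L s) = coefP T p q r s (L s) + 1 + C (EL T) s2 s s).
  { rewrite !coefP_L. unfold C. rewrite (zr_split s2 (s-1) q) by lia. rewrite (zr_snoc s2 s) by lia.
    replace (s - 1 + 1) with s by lia. rewrite (zr_snoc p r) by lia. rewrite !cnt_app.
    rewrite (cnt_ext _ (fun x => isUL T p q r s x s) (fun x => isUL T p q r s2 x s) (zr p (r-1))).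
    2:{ intros x Hx. apply In_zr in Hx. apply isUL_ch; auto. rewrite (eqb_f x r) by lia. auto. }
    rewrite !cnt_cons, I1, I2. rewrite (adj_false_near _ s s) by lia.
    change (cnt (fun x : Z => isUL T p q r s x s) []) with 0%nat.
    change (cnt (fun x : Z => isUL T p q r s2 x s) []) with 0%nat.
    change (cnt (adj (EL T) s) []) with 0%nat. lia. }
  assert (l5 : forall w, s2 <= w < s -> coefP T p q r s2 (L w) = 1 + C (EL T) s2 s w).
  { intros w Hw. rewrite coefP_L. unfold C. rewrite (zr_split s2 s q) by lia. rewrite cnt_app.
    rewrite (cnt_zero _ _ (zr (s+1) q)).
    2:{ intros u Hu. apply In_zr in Hu. apply adj_EL_false; intros; [|lia].
        destruct (T (Low w u)) eqn:E; auto. xc NC (Low w u) (Conn r s). }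
    rewrite (cnt_zero _ _ (zr p r)). lia.
    intros x Hx. apply In_zr in Hx. destruct (Z.eq_dec x r).
    - subst x. destruct (Z.eq_dec w s2).
      + subst w. unfold isUL. rewrite !Z.eqb_refl. rewrite !andb_false_r. auto.
      + apply isUL_false_T. apply NoC. lia.
    - apply isUL_false_T. destruct (T (Conn x w)) eqn:E; auto. xc NC (Conn x w) (Conn r s). }
  unfold FW, path.
  rewrite (zr_snoc (i+1) r) by lia. rewrite (zr_cons s a) by lia.
  rewrite (zr_split s2 (s-1) a) by lia. replace (s - 1 + 1) with s by lia.
  rewrite (zr_cons s2 (s-1)) by lia. rewrite (zr_cons s a) by lia.
  repeat rewrite map_app; cbn [map]; repeat rewrite map_app; cbn [map].
  set (cs1 := map (coefP T p q r s) (map U (zr (i + 1) (r - 1)))).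
  set (cs2 := map (coefP T p q r s) (map L (zr (s + 1) a))).
  replace (map (coefP T p q r s2) (map U (zr (i + 1) (r - 1)))) with cs1.
  2:{ unfold cs1. rewrite !map_map. apply map_ext_in. intros x Hx. apply In_zr in Hx. apply l1. lia. }
  replace (map (coefP T p q r s2) (map L (zr (s + 1) a))) with cs2.
  2:{ unfold cs2. rewrite !map_map. apply map_ext_in. intros x Hx. apply In_zr in Hx. apply l2. lia. }
  rewrite (map_map L (coefP T p q r s2) (zr (s2+1) (s-1))).
  rewrite (map_ext_in _ (fun w => 1 + C (EL T) s2 s w) (zr (s2+1) (s-1))).
  2:{ intros w Hw. apply In_zr in Hw. apply l5. lia. }
  rewrite l3, l4, (l5 s2) by lia.
  set (b := coefP T p q r s (U r)). set (al := coefP T p q r s (L s)).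
  match goal with |- fst (steps ?L1 _) = fst (steps ?L2 _) =>
    replace L1 with (cs1 ++ [b; al] ++ cs2) by lnorm;
    replace L2 with (cs1 ++ ([b + 1; 1 + C (EL T) s2 s s2] ++ map (fun w : Z => 1 + C (EL T) s2 s w) (zr (s2 + 1) (s - 1)) ++
         [al + 1 + C (EL T) s2 s s]) ++ cs2) by lnorm end.
  f_equal. symmetry. apply steps_mid. intros st. apply (fan_lower (EL T) HN s2 s Hlt HL).
Qed.


Definition VALT (T : arc -> bool) := forall x, T x = true -> valid_arc x.

Lemma mul_pos_cases : forall a b, a * b > 0 -> (a > 0 /\ b > 0) \/ (a < 0 /\ b < 0).
Proof. intros. destruct (Z.lt_trichotomy a 0) as [H1|[H1|H1]]; destruct (Z.lt_trichotomy b 0) as [H2|[H2|H2]]; subst; try nia. Qed.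

Lemma ncc : forall T, NCT T -> forall a b c d, T (Conn a b) = true -> T (Conn c d) = true ->
  (a - c) * (b - d) <= 0.
Proof.
  intros T NC a b c d H1 H2. destruct (arc_eq_dec (Conn a b) (Conn c d)) as [E|E].
  - inversion E; subst. nia.
  - destruct (Z_le_gt_dec ((a - c) * (b - d)) 0); auto. exfalso. apply (NC _ _ H1 H2 E). simpl. auto.
Qed.

Lemma ncc_nest : forall T, NCT T -> forall a b c d, T (Conn a b) = true -> T (Conn c d) = true ->
  (a <= c /\ d <= b) \/ (c <= a /\ b <= d).
Proof.
  intros. pose proof (ncc T H a b c d H0 H1).
  destruct (Z.lt_trichotomy a c) as [E|[E|E]]; [left; nia|subst|right; nia].
  destruct (Z_le_gt_dec b d); [right|left]; lia.
Qed.

Lemma NCE_U : forall T, NCT T -> NCE (EU T).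
Proof.
  intros T NC a b c d H1 H2 E1 E2 H3 H4. unfold EU in *.
  apply (NC (Up a b) (Up c d)); auto. intro E; inversion E; lia. simpl. lia.
Qed.

Lemma NCE_L : forall T, NCT T -> NCE (EL T).
Proof.
  intros T NC a b c d H1 H2 E1 E2 H3 H4. unfold EL in *.
  apply (NC (Low a b) (Low c d)); auto. intro E; inversion E; lia. simpl. lia.
Qed.

Lemma LM_up : forall T, VALT T -> NCT T -> MAXT T -> forall r s r2,
  T (Conn r s) = true -> T (Conn r2 s) = true -> r < r2 ->
  (forall x y, r < x < r2 -> T (Conn x y) = false) -> LM (EU T) r r2.
Proof.
  intros T VA NC MX r s r2 H1 H2 Hlt NoC a b Ha Hb Hab Eab. unfold EU in Eab.
  destruct (MX (Up a b)) as [z [Tz Cz]]; [simpl; lia|auto|].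
  destruct z as [x y|c d|c d]; simpl in Cz.
  - rewrite NoC in Tz by lia. discriminate.
  - pose proof (VA _ Tz) as Vz. simpl in Vz.
    exists c, d. unfold EU. split; [|split; [|split; [lia|split; [exact Tz|lia]]]].
    + destruct (Z_le_gt_dec r c); auto. exfalso. xc NC (Up c d) (Conn r s).
    + destruct (Z_le_gt_dec d r2); auto. exfalso. xc NC (Up c d) (Conn r2 s).
  - contradiction.
Qed.

Lemma LM_low : forall T, VALT T -> NCT T -> MAXT T -> forall r s s2,
  T (Conn r s) = true -> T (Conn r s2) = true -> s2 < s ->
  (forall x y, s2 < y < s -> T (Conn x y) = false) -> LM (EL T) s2 s.
Proof.
  intros T VA NC MX r s s2 H1 H2 Hlt NoC a b Ha Hb Hab Eab. unfold EL in Eab.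
  destruct (MX (Low a b)) as [z [Tz Cz]]; [simpl; lia|auto|].
  destruct z as [x y|c d|c d]; simpl in Cz.
  - rewrite NoC in Tz by lia. discriminate.
  - contradiction.
  - pose proof (VA _ Tz) as Vz. simpl in Vz.
    exists c, d. unfold EL. split; [|split; [|split; [lia|split; [exact Tz|lia]]]].
    + destruct (Z_le_gt_dec s2 c); auto. exfalso. xc NC (Low c d) (Conn r s2).
    + destruct (Z_le_gt_dec d s); auto. exfalso. xc NC (Low c d) (Conn r s).
Qed.

Lemma min_nat : forall (P : nat -> Prop) n, P n -> exists m, P m /\ forall k, (k < m)%nat -> ~ P k.
Proof.
  intros P n. induction n as [n IH] using (well_founded_induction lt_wf). intros Hn.
  destruct (classic (exists k, (k < n)%nat /\ P k)) as [[k [Hk Pk]]|H].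
  - apply (IH k Hk Pk).
  - exists n. split; auto. intros k Hk Pk. apply H. eauto.
Qed.

Lemma next_arc : forall T, VALT T -> NCT T -> MAXT T -> forall r s r' s',
  T (Conn r s) = true -> T (Conn r' s') = true -> r <= r' -> s' <= s -> (r <> r' \/ s <> s') ->
  (exists r2, r < r2 <= r' /\ T (Conn r2 s) = true /\ forall x y, r < x < r2 -> T (Conn x y) = false) \/
  (exists s2, s' <= s2 < s /\ T (Conn r s2) = true /\ forall x y, s2 < y < s -> T (Conn x y) = false).
Proof.
  intros T VA NC MX r s r' s' H1 H2 Hr Hs Hne.
  set (P := fun n => exists x y, T (Conn x y) = true /\ r <= x <= r' /\ s' <= y <= s /\
            (r <> x \/ s <> y) /\ Z.to_nat ((x - r) + (s - y)) = n).
  destruct (min_nat P (Z.to_nat ((r' - r) + (s - s')))) as [m [[x [y [Txy [Hx [Hy [Hn Hm]]]]]] Mn]].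
  { exists r', s'. repeat split; auto; lia. }
  assert (Mn' : forall x' y', T (Conn x' y') = true -> r <= x' <= r' -> s' <= y' <= s -> (r <> x' \/ s <> y') ->
     (x' - r) + (s - y') < (x - r) + (s - y) -> False).
  { intros x' y' T' H3 H4 H5 H6. apply (Mn (Z.to_nat ((x' - r) + (s - y')))). lia.
    exists x', y'. repeat split; try lia; auto. }
  destruct (Z.eq_dec y s) as [Ey|Ey].
  - subst y. left. exists x. repeat split; auto; try lia.
    intros u v Hu. destruct (T (Conn u v)) eqn:Tuv; auto. exfalso.
    pose proof (ncc T NC u v r s Tuv H1). pose proof (ncc T NC u v x s Tuv Txy).
    assert (v = s) by nia. subst v. apply (Mn' u s); auto; lia.
  - destruct (Z.eq_dec x r) as [Ex|Ex].
    + subst x. right. exists y. repeat split; auto; try lia.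
      intros u v Hv. destruct (T (Conn u v)) eqn:Tuv; auto. exfalso.
      pose proof (ncc T NC u v r s Tuv H1). pose proof (ncc T NC u v r y Tuv Txy).
      assert (u = r) by nia. subst u. apply (Mn' r v); auto; lia.
    + exfalso.
      destruct (T (Conn r y)) eqn:Try.
      { apply (Mn' r y); auto; lia. }
      destruct (MX (Conn r y)) as [z [Tz Cz]]; [simpl; auto|auto|].
      destruct z as [x' y'|c d|c d]; simpl in Cz.
      * apply mul_pos_cases in Cz.
        pose proof (ncc T NC x' y' r s Tz H1). pose proof (ncc T NC x' y' x y Tz Txy).
        destruct Cz as [Cz|Cz]; [nia|].
        assert (x' <= x) by nia. assert (y' <= s) by nia.
        apply (Mn' x' y'); auto; lia.
      * xc NC (Up c d) (Conn r s).
      * xc NC (Low c d) (Conn x y).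
Qed.

Lemma FW_rs : forall T, VALT T -> NCT T -> MAXT T -> forall p q r' s' i a n r s,
  Z.to_nat ((r' - r) + (s - s')) = n ->
  T (Conn p q) = true -> T (Conn r s) = true -> T (Conn r' s') = true ->
  r <= r' -> s' <= s -> p < i < r -> s < a < q ->
  FW T p q r s i a = FW T p q r' s' i a.
Proof.
  intros T VA NC MX p q r' s' i a n. induction n as [n IH] using (well_founded_induction lt_wf).
  intros r s Hn Hpq Hrs Hr's' Hr Hs Hi Ha.
  destruct (classic (r = r' /\ s = s')) as [[E1 E2]|Hne]; [subst; reflexivity|].
  destruct (next_arc T VA NC MX r s r' s') as [[r2 [H1 [H2 H3]]]|[s2 [H1 [H2 H3]]]]; auto.
  { destruct (Z.eq_dec r r'); auto. }
  - assert (HL := LM_up T VA NC MX r s r2 Hrs H2 ltac:(lia) H3).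
    rewrite (FW_fan_up T NC p q r s r2 i a Hpq Hrs H2 ltac:(lia) H3 HL (NCE_U T NC) Hi Ha).
    apply (IH (Z.to_nat ((r' - r2) + (s - s')))); auto; lia.
  - assert (HL := LM_low T VA NC MX r s s2 Hrs H2 ltac:(lia) H3).
    rewrite (FW_fan_low T NC p q r s s2 i a Hpq Hrs H2 ltac:(lia) H3 HL (NCE_L T NC) Hi Ha).
    apply (IH (Z.to_nat ((r' - r) + (s2 - s')))); auto; lia.
Qed.

Lemma indep : forall T, VALT T -> NCT T -> MAXT T -> forall i a p1 q1 r1 s1 p2 q2 r2 s2,
  Phi_choice T i a (p1, q1, r1, s1) -> Phi_choice T i a (p2, q2, r2, s2) ->
  FW T p1 q1 r1 s1 i a = FW T p2 q2 r2 s2 i a.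
Proof.
  intros T VA NC MX i a p1 q1 r1 s1 p2 q2 r2 s2 [A1 [B1 [C1 D1]]] [A2 [B2 [C2 D2]]].
  transitivity (FW T p1 q1 r2 s2 i a).
  - destruct (ncc_nest T NC r1 s1 r2 s2 B1 B2) as [[E1 E2]|[E1 E2]].
    + apply (FW_rs T VA NC MX p1 q1 r2 s2 i a _ r1 s1 eq_refl); auto; lia.
    + symmetry. apply (FW_rs T VA NC MX p1 q1 r1 s1 i a _ r2 s2 eq_refl); auto; lia.
  - destruct (ncc_nest T NC p1 q1 p2 q2 A1 A2) as [[E1 E2]|[E1 E2]].
    + symmetry. apply FW_pq; auto; lia.
    + apply FW_pq; auto; lia.
Qed.

Lemma Phi_FW : forall T, triangulation T -> forall i a p q r s,
  Phi_choice T i a (p, q, r, s) -> Phi T i a = FW T p q r s i a.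
Proof.
  intros T HT i a p q r s Hc. destruct HT as [VA [NC [MX EX]]].
  unfold Phi.
  assert (Hex : exists c, Phi_choice T i a c).
  { destruct (EX i a) as [p0 [q0 [p1 [q1 [H1 [H2 [H3 [H4 [H5 H6]]]]]]]]].
    exists (p0, q0, p1, q1). unfold Phi_choice. repeat split; auto; lia. }
  pose proof (epsilon_spec (inhabits (0, 0, 0, 0)) (Phi_choice T i a) Hex) as Hs.
  destruct (epsilon (inhabits (0, 0, 0, 0)) (Phi_choice T i a)) as [[[p0 q0] r0] s0].
  pose proof Hs as [A [B [Cc D]]].
  rewrite friese_FW by lia. apply (indep T VA NC MX); auto.
Qed.


Lemma steps_lin : forall L a b x1 y1 x2 y2,
  steps L (a * x1 + b * x2, a * y1 + b * y2) =
  (a * fst (steps L (x1, y1)) + b * fst (steps L (x2, y2)),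
   a * snd (steps L (x1, y1)) + b * snd (steps L (x2, y2))).
Proof.
  induction L as [|c L IH]; intros; simpl.
  - auto.
  - unfold step; simpl.
    replace (c * (a * y1 + b * y2) - (a * x1 + b * x2)) with (a * (c * y1 - x1) + b * (c * y2 - x2)) by ring.
    apply IH.
Qed.

Lemma steps_det : forall L x1 y1 x2 y2,
  fst (steps L (x1, y1)) * snd (steps L (x2, y2)) - snd (steps L (x1, y1)) * fst (steps L (x2, y2))
  = x1 * y2 - y1 * x2.
Proof.
  induction L as [|c L IH]; intros; simpl.
  - auto.
  - unfold step; simpl. rewrite IH. ring.
Qed.

Lemma three_rows : forall c1 c2 L,
  fst (steps (c1 :: c2 :: L) (0, 1)) + fst (steps L (0, 1)) = c1 * fst (steps (c2 :: L) (0, 1)).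
Proof.
  intros. rewrite !steps_cons.
  replace (step c2 (step c1 (0,1))) with (c1 * 1 + (-1) * 0, c1 * c2 + (-1) * 1)
    by (unfold step; simpl; f_equal; ring).
  rewrite steps_lin. unfold step. cbn [fst snd]. replace (c2 * 1 - 0) with c2 by ring. ring.
Qed.

Lemma wronski : forall c M d,
  fst (steps (c :: M) (0, 1)) * fst (steps (M ++ [d]) (0, 1))
  - fst (steps (c :: M ++ [d]) (0, 1)) * fst (steps M (0, 1)) = 1.
Proof.
  intros. rewrite app_comm_cons, !steps_app. rewrite steps_cons. unfold step at 2; simpl.
  change (steps [d] ?st) with (step d st). unfold step. simpl.
  pose proof (steps_det M 1 c 0 1). simpl in H. replace (c * 1 - 0) with c in * by ring. rewrite (steps_det M 1 c 0 1). ring.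
Qed.

Definition arc_of (v w : vtx) : arc := match mk_arc v w with Some x => x | None => Conn 0 0 end.

Definition lst (T : arc -> bool) (p q r s j : Z) : list arc :=
  map (arc_of (U j)) (filter (is_diag T p q r s (U j)) (pverts p q r s)).

Lemma NoDup_pverts : forall p q r s, NoDup (pverts p q r s).
Proof.
  intros. unfold pverts. apply NoDup_app.
  - apply NoDup_map_NoDup_ForallPairs. intros x y _ _ H; inversion H; auto. apply NoDup_zr.
  - apply NoDup_map_NoDup_ForallPairs. intros x y _ _ H; inversion H; auto. apply NoDup_zr.
  - intros v H1 H2. apply in_map_iff in H1, H2. destruct H1 as [x [<- _]]. destruct H2 as [y [E _]]. discriminate.
Qed.

Lemma is_diag_U_cases : forall T p q r s j w, is_diag T p q r s (U j) w = true ->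
  (exists u, w = U u /\ j + 2 <= u /\ arc_of (U j) w = Up j u /\ T (Up j u) = true) \/
  (exists u, w = U u /\ u + 2 <= j /\ arc_of (U j) w = Up u j /\ T (Up u j) = true) \/
  (exists y, w = L y /\ arc_of (U j) w = Conn j y /\ isUL T p q r s j y = true).
Proof.
  intros T p q r s j w H. destruct w as [u|y].
  - rewrite is_diag_UU in H. unfold adj, EU in H. unfold arc_of, mk_arc.
    destruct (j + 2 <=? u) eqn:E1; [apply Z.leb_le in E1; left; exists u; auto|].
    destruct (u + 2 <=? j) eqn:E2; [apply Z.leb_le in E2; right; left; exists u; auto|discriminate].
  - rewrite is_diag_UL in H. right; right. exists y. auto.
Qed.

Lemma lst_NoDup : forall T p q r s j, NoDup (lst T p q r s j).
Proof.
  intros. unfold lst. apply NoDup_map_NoDup_ForallPairs.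
  2:{ apply NoDup_filter. apply NoDup_pverts. }
  intros w1 w2 H1 H2 E. apply filter_In in H1, H2. destruct H1 as [_ H1]; destruct H2 as [_ H2].
  apply is_diag_U_cases in H1, H2.
  destruct H1 as [[u1 [-> [? [A1 _]]]]|[[u1 [-> [? [A1 _]]]]|[y1 [-> [A1 _]]]]];
  destruct H2 as [[u2 [-> [? [A2 _]]]]|[[u2 [-> [? [A2 _]]]]|[y2 [-> [A2 _]]]]];
  rewrite A1, A2 in E; inversion E; subst; auto; lia.
Qed.

Lemma lst_char : forall T, VALT T -> NCT T -> forall p q r s j,
  T (Conn p q) = true -> T (Conn r s) = true -> p < j < r -> s <= q ->
  forall x, In x (lst T p q r s j) <-> (T x = true /\ has_endpoint (U j) x).
Proof.
  intros T VA NC p q r s j Hpq Hrs Hj Hsq x. unfold lst. split.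
  - intros H. apply in_map_iff in H. destruct H as [w [<- Hw]].
    apply filter_In in Hw. destruct Hw as [_ Hw]. apply is_diag_U_cases in Hw.
    destruct Hw as [[u [-> [_ [A B]]]]|[[u [-> [_ [A B]]]]|[y [-> [A B]]]]]; rewrite A; simpl; split; auto.
    unfold isUL in B. apply andb_true_iff in B. destruct B as [B _]. apply andb_true_iff in B. tauto.
  - intros [Tx Hx]. pose proof (VA x Tx) as Vx.
    destruct x as [a b|a b|a b]; simpl in Hx, Vx.
    + destruct Hx as [Hx|Hx]; [|discriminate]. assert (a = j) by (inversion Hx; auto). subst a.
      apply in_map_iff. exists (L b). split; [reflexivity|].
      apply filter_In. split.
      * unfold pverts. apply in_or_app. right. apply in_map. apply In_zr.
        split.
        { destruct (Z_le_gt_dec s b); auto. xc NC (Conn j b) (Conn r s). }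
        { destruct (Z_le_gt_dec b q); auto. xc NC (Conn j b) (Conn p q). }
      * rewrite is_diag_UL. unfold isUL. rewrite Tx, (eqb_f j p), (eqb_f j r) by lia. auto.
    + destruct Hx as [Hx|Hx].
      * assert (a = j) by (inversion Hx; auto). subst a.
        apply in_map_iff. exists (U b). split.
        { unfold arc_of, mk_arc. destruct (j + 2 <=? b) eqn:E; auto. apply Z.leb_gt in E; lia. }
        apply filter_In. split.
        { unfold pverts. apply in_or_app. left. apply in_map. apply In_zr. split; [lia|].
          destruct (Z_le_gt_dec b r); auto. xc NC (Up j b) (Conn r s). }
        rewrite is_diag_UU. rewrite adj_up by lia. auto.
      * assert (b = j) by (inversion Hx; auto). subst b.
        apply in_map_iff. exists (U a). split.
        { unfold arc_of, mk_arc. destruct (j + 2 <=? a) eqn:E; [apply Z.leb_le in E; lia|].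
          destruct (a + 2 <=? j) eqn:E2; auto. apply Z.leb_gt in E2; lia. }
        apply filter_In. split.
        { unfold pverts. apply in_or_app. left. apply in_map. apply In_zr. split; [|lia].
          destruct (Z_le_gt_dec p a); auto. xc NC (Up a j) (Conn p q). }
        rewrite is_diag_UU. rewrite adj_down by lia. auto.
    + destruct Hx as [Hx|Hx]; discriminate.
Qed.

Lemma coef_gamma : forall T, VALT T -> NCT T -> forall p q r s p0 q0 r0 s0 j,
  T (Conn p q) = true -> T (Conn r s) = true -> p < j < r -> s <= q ->
  T (Conn p0 q0) = true -> T (Conn r0 s0) = true -> p0 < j < r0 -> s0 <= q0 ->
  coefP T p q r s (U j) = 1 + Z.of_nat (length (lst T p0 q0 r0 s0 j)).
Proof.
  intros. unfold coefP. f_equal. f_equal.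
  assert (E : length (lst T p q r s j) = cnt (is_diag T p q r s (U j)) (pverts p q r s)).
  { unfold lst, cnt. apply length_map. }
  rewrite <- E. apply Nat.le_antisymm; apply NoDup_incl_length; try apply lst_NoDup;
  intros x Hx.
  - apply (lst_char T H H0 p0 q0 r0 s0 j); auto. apply (lst_char T H H0 p q r s j); auto.
  - apply (lst_char T H H0 p q r s j); auto. apply (lst_char T H H0 p0 q0 r0 s0 j); auto.
Qed.


Lemma path_prev : forall r s i b, i + 1 <= r -> path r s i b = U (i+1) :: path r s (i+1) b.
Proof. intros. unfold path. rewrite (zr_cons (i+1) r) by lia. reflexivity. Qed.

Lemma path_next : forall r s i b, s <= b + 1 -> path r s i (b+1) = path r s i b ++ [L (b+1)].
Proof. intros. unfold path. rewrite (zr_snoc s (b+1)) by lia. replace (b + 1 - 1) with b by lia.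
  rewrite map_app, app_assoc. reflexivity. Qed.

Lemma rowA : forall T p q r s j b, j + 1 < r ->
  FW T p q r s (j-1) b + FW T p q r s (j+1) b = coefP T p q r s (U j) * FW T p q r s j b.
Proof.
  intros. unfold FW. rewrite (path_prev r s (j-1) b) by lia. replace (j - 1 + 1) with j by lia.
  rewrite (path_prev r s j b) by lia. cbn [map]. apply three_rows.
Qed.

Lemma rowW : forall T p q r s j b, j + 1 < r -> s <= b ->
  FW T p q r s (j-1) b * FW T p q r s j (b+1) - FW T p q r s (j-1) (b+1) * FW T p q r s j b = 1.
Proof.
  intros. unfold FW. rewrite !(path_next r s _ b) by lia.
  rewrite (path_prev r s (j-1) b) by lia. replace (j - 1 + 1) with j by lia.
  rewrite !map_app. cbn [map app]. apply wronski.
Qed.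

Theorem mainTheorem13 (T : arc -> bool) (HT : triangulation T) (j : Z) :
  exists l : list arc,
    NoDup l /\
    (forall x, In x l <-> (T x = true /\ has_endpoint (U j) x)) /\
    let gamma := 1 + Z.of_nat (length l) in
    (forall a : Z, Phi T (j - 1) a + Phi T (j + 1) a = gamma * Phi T j a) /\
    (forall a : Z,
       gamma = Phi T (j - 1) a * Phi T (j + 1) (a + 1)
               - Phi T (j - 1) (a + 1) * Phi T (j + 1) a).
Proof.
  pose proof HT as [VA [NC [MX EX]]].
  destruct (EX j 0) as [p0 [q0 [r0 [s0 [A0 [B0 [C0 [D0 [E0 F0]]]]]]]]].
  exists (lst T p0 q0 r0 s0 j). split; [apply lst_NoDup|]. split.
  { apply lst_char; auto; lia. }
  intros gamma.
  assert (Hpoly : forall a, exists p q r s, T (Conn p q) = true /\ T (Conn r s) = true /\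
            p < j - 1 /\ j + 1 < r /\ s < a /\ a + 1 < q).
  { intros a. destruct (EX (j-1) (a+1)) as [p [q [_ [_ [A [_ [C [D _]]]]]]]].
    destruct (EX (j+1) a) as [_ [_ [r [s [_ [B [_ [_ [E F]]]]]]]]].
    exists p, q, r, s. repeat split; auto; lia. }
  assert (Hg : forall p q r s, T (Conn p q) = true -> T (Conn r s) = true -> p < j - 1 -> j + 1 < r ->
            s <= q -> coefP T p q r s (U j) = gamma).
  { intros. unfold gamma. apply coef_gamma; auto; lia. }
  assert (HP : forall p q r s i b, T (Conn p q) = true -> T (Conn r s) = true -> p < i < r -> s < b < q ->
            Phi T i b = FW T p q r s i b).
  { intros. apply Phi_FW; auto. unfold Phi_choice. repeat split; auto; lia. }
  split.
  - intros a. destruct (Hpoly a) as [p [q [r [s [A [B [C [D [E F]]]]]]]]].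
    rewrite !(HP p q r s) by (auto; lia). rewrite <- (Hg p q r s) by (auto; lia). apply rowA. lia.
  - intros a. destruct (Hpoly a) as [p [q [r [s [A [B [C [D [E F]]]]]]]]].
    rewrite !(HP p q r s) by (auto; lia).
    pose proof (rowA T p q r s j a D) as R1. pose proof (rowA T p q r s j (a+1) D) as R2.
    pose proof (rowW T p q r s j a D ltac:(lia)) as W.
    rewrite (Hg p q r s) in R1, R2 by (auto; lia).
    set (x1 := FW T p q r s (j-1) a) in *. set (x2 := FW T p q r s (j-1) (a+1)) in *.
    set (y1 := FW T p q r s j a) in *. set (y2 := FW T p q r s j (a+1)) in *.
    set (z1 := FW T p q r s (j+1) a) in *. set (z2 := FW T p q r s (j+1) (a+1)) in *.
    replace z1 with (gamma * y1 - x1) by lia. replace z2 with (gamma * y2 - x2) by lia.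
    transitivity (gamma * (x1 * y2 - x2 * y1)); [rewrite W; ring | ring].
Qed.
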